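(* If $G$ is a graph with no isolated vertices, then $\gamma_{\rm gr}^t(G)\le 2\gamma_{\rm gr}(G)$.
   Context: $N(v)$ denotes the open neighborhood and $N[v]=N(v)\cup\{v\}$ the closed neighborhood of $v$. A sequence $S=(v_1,\ldots,v_k)$ of distinct vertices is a legal open neighborhood sequence if $N(v_i)\setminus \bigcup_{j=1}^{i-1} N(v_j)\neq\emptyset$ for every $i\in\{2,\ldots,k\}$, and a total dominating sequence if moreover $\{v_1,\ldots,v_k\}$ is a total dominating set (every vertex has a neighbor in it); $\gamma_{\rm gr}^t(G)$ is the maximum length of a total dominating sequence. A sequence $S=(v_1,\ldots,v_k)$ of distinct vertices is a legal closed neighborhood sequence if $N[v_i]\setminus \bigcup_{j=1}^{i-1} N[v_j]\neq\emptyset$ for every $i\in\{2,\ldots,k\}$, and a dominating sequence if moreover $\{v_1,\ldots,v_k\}$ is a dominating set (every vertex is in it or has a neighbor in it); the Grundy domination number $\gamma_{\rm gr}(G)$ is the maximum length of a dominating sequence. *)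

(* Defs.v *)
(* A finite simple graph is a symmetric irreflexive relation e on a finType T. *)
From mathcomp Require Import all_boot.
Set Implicit Arguments. Unset Strict Implicit. Unset Printing Implicit Defensive.

Section Grundy.
Variables (T : finType) (e : rel T).

Definition onbhd (v : T) : {set T} := [set u | e v u].
Definition cnbhd (v : T) : {set T} := v |: onbhd v.

Definition onbhd_seq (s : seq T) : {set T} := \bigcup_(x <- s) onbhd x.
Definition cnbhd_seq (s : seq T) : {set T} := \bigcup_(x <- s) cnbhd x.

(* legal open / closed neighborhood sequences: distinct vertices, each v_i (i >= 2)
   footprints a new vertex; the condition for i = 1 is vacuous as in the paper *)
Definition legal_open_seq (s : seq T) : bool :=
  uniq s && [forall i : 'I_(size s), (0 < i) ==>
     (onbhd (tnth (in_tuple s) i) :\: onbhd_seq (take i s) != set0)].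
Definition legal_closed_seq (s : seq T) : bool :=
  uniq s && [forall i : 'I_(size s), (0 < i) ==>
     (cnbhd (tnth (in_tuple s) i) :\: cnbhd_seq (take i s) != set0)].

Definition total_dominating (A : {set T}) : bool :=
  [forall v, [exists u in A, e v u]].
Definition dominating (A : {set T}) : bool :=
  [forall v, (v \in A) || [exists u in A, e v u]].

Definition total_dominating_seq (s : seq T) : bool :=
  legal_open_seq s && total_dominating [set x in s].
Definition dominating_seq (s : seq T) : bool :=
  legal_closed_seq s && dominating [set x in s].

(* maximum lengths (sequences of distinct vertices have length <= #|T|);
   value 0 if no such sequence exists *)
Definition total_grundy_dom : nat :=
  \max_(k < #|T|.+1 | [exists s : k.-tuple T, total_dominating_seq s]) k.
Definition grundy_dom : nat :=
  \max_(k < #|T|.+1 | [exists s : k.-tuple T, dominating_seq s]) k.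

End Grundy.

(* Main.v *)
Require Import Defs.
From mathcomp Require Import all_boot.
From mathcomp Require Import zify.

Section Aux.
Variables (T : finType) (e : rel T).

Definition legal_gen (nb : T -> {set T}) (s : seq T) : bool :=
  uniq s && [forall i : 'I_(size s), (0 < i) ==>
     (nb (tnth (in_tuple s) i) :\: \bigcup_(x <- take i s) nb x != set0)].

Lemma forall_iota n (P : nat -> bool) :
  [forall i : 'I_n, P i] = all P (iota 0 n).
Proof.
apply/forallP/allP => [H i|H i].
  rewrite mem_iota add0n => lt_in; exact: (H (Ordinal lt_in)).
apply: H; rewrite mem_iota add0n; exact: ltn_ord.
Qed.

Lemma legal_gen_rcons nb s x :
  legal_gen nb (rcons s x) =
  [&& legal_gen nb s, x \notin s &
     (size s == 0) || (nb x :\: \bigcup_(y <- s) nb y != set0)].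
Proof.
rewrite /legal_gen rcons_uniq.
have E : forall t : seq T, [forall i : 'I_(size t), (0 < i) ==>
     (nb (tnth (in_tuple t) i) :\: \bigcup_(y <- take i t) nb y != set0)]
   = all (fun i => (0 < i) ==> (nb (nth x t i) :\: \bigcup_(y <- take i t) nb y != set0))
       (iota 0 (size t)).
  move=> t; rewrite -forall_iota; apply: eq_forallb => i.
  by rewrite (tnth_nth x).
rewrite !E size_rcons -[(size s).+1]addn1 iotaD all_cat /= andbT.
have -> : all (fun i => (0 < i) ==> (nb (nth x (rcons s x) i) :\:
             \bigcup_(y <- take i (rcons s x)) nb y != set0)) (iota 0 (size s))
        = all (fun i => (0 < i) ==> (nb (nth x s i) :\:
             \bigcup_(y <- take i s) nb y != set0)) (iota 0 (size s)).
  apply: eq_in_all => i; rewrite mem_iota add0n => /andP [_ lt_is].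
  by rewrite nth_rcons lt_is -cats1 takel_cat // ltnW.
rewrite add0n nth_rcons ltnn eqxx -cats1 take_size_cat //.
case: (size s) => [|n] /=; first by rewrite !andbT; case: (uniq s); case: (x \in s).
by case: (uniq s); case: (x \in s); case: all.
Qed.

Lemma mem_bigcup_seq (nb : T -> {set T}) (s : seq T) y :
  (y \in \bigcup_(a <- s) nb a) = has (fun a => y \in nb a) s.
Proof.
elim: s => [|a s IH]; first by rewrite big_nil inE.
by rewrite big_cons in_setU IH.
Qed.

Lemma legal_open_rcons s x :
  legal_open_seq e (rcons s x) =
  [&& legal_open_seq e s, x \notin s &
     (size s == 0) || (onbhd e x :\: onbhd_seq e s != set0)].
Proof. exact: (legal_gen_rcons (onbhd e)). Qed.

Lemma legal_closed_rcons s x :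
  legal_closed_seq e (rcons s x) =
  [&& legal_closed_seq e s, x \notin s &
     (size s == 0) || (cnbhd e x :\: cnbhd_seq e s != set0)].
Proof. exact: (legal_gen_rcons (cnbhd e)). Qed.

Lemma legal_closed_nil : legal_closed_seq e [::].
Proof. by rewrite /legal_closed_seq /=; apply/forallP => -[]. Qed.

Lemma split_lemma s : legal_open_seq e s ->
  exists A B, legal_closed_seq e A /\ legal_closed_seq e B /\
     {subset A <= s} /\ {subset B <= s} /\
     (forall y, y \in A -> y \notin B) /\ size A + size B = size s.
Proof.
elim/last_ind: s => [|s x IH].
  move=> _; exists [::], [::]; do !split => //; exact: legal_closed_nil.
rewrite legal_open_rcons => /and3P [Hs Hx Hfp].
have [A [B [LA [LB [SA [SB [D Sz]]]]]]] := IH Hs.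
have sub_r : forall C : seq T, {subset C <= s} -> {subset rcons C x <= rcons s x}.
  move=> C SC y; rewrite !mem_rcons !in_cons => /orP [->//|/SC ->]; by rewrite orbT.
have xC : forall C : seq T, {subset C <= s} -> x \notin C.
  by move=> C SC; apply/negP => /SC; apply/negP.
have [s0 | sn0] := boolP (size s == 0).
  have A0 : size A == 0 by move: s0; rewrite -Sz; case: (size A).
  exists (rcons A x), B; do !split.
  - by rewrite legal_closed_rcons LA xC // A0.
  - exact: LB.
  - exact: sub_r.
  - by move=> y /SB ys; rewrite mem_rcons in_cons ys orbT.
  - move=> y; rewrite mem_rcons in_cons => /orP [/eqP -> | yA]; last exact: D.
    by apply/negP => /SB; apply/negP.
  - by rewrite size_rcons addSn Sz size_rcons.
move: Hfp; rewrite (negbTE sn0) /= => /set0Pn [u]; rewrite in_setD => /andP [uS ux].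
have key : forall C : seq T, {subset C <= s} -> u \notin C ->
    cnbhd e x :\: cnbhd_seq e C != set0.
  move=> C SC uC; apply/set0Pn; exists u; rewrite in_setD.
  rewrite /cnbhd in_setU1 ux orbT andbT.
  rewrite /cnbhd_seq mem_bigcup_seq; apply/hasPn => a aC.
  rewrite in_setU1 negb_or; apply/andP; split.
    by apply/eqP => E; move: uC; rewrite E aC.
  apply/negP => ua; move: uS; rewrite /onbhd_seq mem_bigcup_seq.
  by move/hasPn => /(_ a (SC a aC)); rewrite ua.
case uA: (u \in A).
  exists A, (rcons B x); do !split.
  - exact: LA.
  - by rewrite legal_closed_rcons LB xC // key // ?orbT //; exact: D.
  - by move=> y /SA ys; rewrite mem_rcons in_cons ys orbT.
  - exact: sub_r.
  - move=> y yA; rewrite mem_rcons in_cons negb_or D // andbT.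
    by apply/eqP => E; move: yA; rewrite E; apply/negP; exact: xC.
  - by rewrite size_rcons addnS Sz size_rcons.
exists (rcons A x), B; do !split.
- by rewrite legal_closed_rcons LA xC // key ?orbT // uA.
- exact: LB.
- exact: sub_r.
- by move=> y /SB ys; rewrite mem_rcons in_cons ys orbT.
- move=> y; rewrite mem_rcons in_cons => /orP [/eqP -> | yA]; last exact: D.
  by apply/negP => /SB; apply/negP.
- by rewrite size_rcons addSn Sz size_rcons.
Qed.

Hypothesis e_sym : symmetric e.

Lemma step t : legal_closed_seq e t ->
  dominating e [set x in t] \/ exists v, legal_closed_seq e (rcons t v) /\ size t < #|T|.
Proof.
move=> Lt.
case Hd: (dominating e [set x in t]); first by left.
right; move: Hd; rewrite /dominating => /negbT; rewrite negb_forall => /existsP [v].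
rewrite negb_or inE => /andP [vt /existsPn Hv].
have Lr : legal_closed_seq e (rcons t v).
  rewrite legal_closed_rcons Lt vt /=; apply/orP; right.
  apply/set0Pn; exists v; rewrite in_setD /cnbhd setU11 andbT /cnbhd_seq mem_bigcup_seq.
  apply/hasPn => a at_; rewrite in_setU1 negb_or; apply/andP; split.
    by apply/eqP => E; move: vt; rewrite E at_.
  by rewrite /onbhd inE e_sym; move: (Hv a); rewrite inE at_.
exists v; split => //.
move: Lr => /andP [/card_uniqP Hc _]; move: (max_card (mem (rcons t v))); by rewrite Hc size_rcons.
Qed.

Lemma extend n t : #|T| - size t <= n -> legal_closed_seq e t ->
  exists t', dominating_seq e t' && (size t <= size t').
Proof.
elim: n t => [|n IH] t Hn Lt.
  have [Hd|[v [Lr Hsz]]] := step t Lt.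
    by exists t; rewrite /dominating_seq Lt Hd leqnn.
  exfalso; lia.
have [Hd|[v [Lr Hsz]]] := step t Lt.
  by exists t; rewrite /dominating_seq Lt Hd leqnn.
have [t' /andP [D S]] := IH (rcons t v) ltac:(rewrite size_rcons; lia) Lr.
by exists t'; rewrite D /=; rewrite size_rcons in S; lia.
Qed.

End Aux.

Theorem mainTheorem16 (T : finType) (e : rel T)
    (e_sym : symmetric e) (e_irr : irreflexive e)
    (no_isolated : forall v : T, exists u : T, e v u) :
  total_grundy_dom e <= 2 * grundy_dom e.
Proof.
apply/bigmax_leqP => k /existsP [s /andP [Hleg _]].
have [A [B [LA [LB [_ [_ [_ Sz]]]]]]] := @split_lemma _ e _ Hleg.
rewrite size_tuple in Sz.
have [t [Lt St]] : exists t, legal_closed_seq e t /\ k <= 2 * size t.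
  case: (leqP (size A) (size B)) => H.
    by exists B; do !split => //; lia.
  by exists A; do !split => //; lia.
have [t' /andP [Dt St']] := @extend _ e e_sym _ t (leqnn _) Lt.
have Ht' : size t' < #|T|.+1.
  move: Dt => /andP [/andP [/card_uniqP Hc _] _]; move: (max_card (mem t')); by rewrite Hc ltnS.
have : size t' <= grundy_dom e.
  apply: (leq_bigmax_cond (Ordinal Ht') (F := fun k : 'I_#|T|.+1 => nat_of_ord k)).
  by apply/existsP; exists (in_tuple t').
lia.
Qed.
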